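(* Let $P$ be a probability distribution on a measurable space $\Omega$, let $\mathcal{Y}\subset\mathbb{R}^n$, and for each $y\in\mathcal{Y}$ let $G(y)\subset\Omega$ be a measurable set (the set $\{(y,\omega):\omega\in G(y)\}$ being jointly measurable), and put $\epsilon(y)=1-P(G(y))$. Fix $\epsilon,\delta\in(0,1)$ and positive numbers $\kappa_1,\kappa_2,\dots$ with $\sum_{s\geq1}\kappa_s^{-1}\leq 1$, and integers $N_s\geq \ln(\kappa_s/\delta)/\epsilon$. Consider a randomized procedure which at steps $s=1,2,\dots$ chooses a point $y^s\in\mathcal{Y}$ as a measurable deterministic function of all samples drawn at the steps preceding $s$, then draws $N_s$ samples $\omega^1_s,\dots,\omega^{N_s}_s$ from $P$, independent of each other and of all previously drawn samples, and stops with output $y^s$ if $\omega^\ell_s\in G(y^s)$ for all $\ell\leq N_s$ (otherwise it proceeds to step $s+1$, or may stop without output). Then the probability of the event ''the procedure stops at some step $s$ with output $y^s$ satisfying $\epsilon(y^s)\geq\epsilon$'' is at most $\delta$.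
   Context: In the application, $\omega=\xi^K$ is the random data trajectory and $G(y)$ is the set of realizations for which, for every $t\leq K$, there exists $x_t$ with $(y,x_t)\in\mathcal{Z}^t_{\xi_t}$; a point $y$ with $\epsilon(y)\leq\epsilon$ is then called $(1-\epsilon)$-implementable. A typical choice is $\kappa_s=s^2\sum_{r\geq1}r^{-2}$ and $N_s$ the smallest integer strictly greater than $\ln(\kappa_s/\delta)/\epsilon$. *)

(* Defs.v *)
From HB Require Import structures.
From mathcomp Require Import all_boot all_order all_algebra.
From mathcomp Require Import all_classical all_reals all_analysis.
Set Implicit Arguments. Unset Strict Implicit. Unset Printing Implicit Defensive.
Import Order.TTheory GRing.Theory Num.Theory.
Import numFieldNormedType.Exports.
Local Open Scope classical_set_scope.
Local Open Scope ring_scope.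

Definition Rn (R : realType) (n : nat) := g_sigma_algebraType (@open 'rV[R]_n).

Definition mutually_independent {d d' : measure_display} {T : measurableType d}
  {R : realType} (Q : probability T R) {I : eqType} (D : set I)
  {O : measurableType d'} (X : I -> T -> O) : Prop :=
  forall (J : seq I) (A : I -> set O),
    uniq J -> (forall j, j \in J -> D j) ->
    (forall j, j \in J -> measurable (A j)) ->
    Q (\bigcap_(j in [set j | j \in J]) (X j @^-1` A j)) =
    (\big[*%E/1%E]_(j <- J) Q (X j @^-1` A j))%E.

Definition past_gen {d d' : measure_display} {T : measurableType d}
  {O : measurableType d'} (N : nat -> nat) (X : nat * nat -> T -> O) (s : nat)
  : set (set T) :=
  [set B | exists r l (A : set O),
     [/\ (r < s)%N, (l < N r)%N, measurable A & B = X (r, l) @^-1` A]].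

(* Main.v *)
Require Import Defs.
From HB Require Import structures.
From mathcomp Require Import all_boot all_order all_algebra.
From mathcomp Require Import all_classical all_reals all_analysis.
From mathcomp Require Import measurable_realfun lra.
Set Implicit Arguments. Unset Strict Implicit. Unset Printing Implicit Defensive.
Import Order.TTheory GRing.Theory Num.Theory.
Import numFieldNormedType.Exports.
Local Open Scope classical_set_scope.
Local Open Scope ring_scope.
Definition pf d d' (T1 : measurableType d) (T2 : measurableType d') (R : realType)
  (m : {measure set T1 -> \bar R}) (f : T1 -> T2) (mf : measurable_fun setT f)
  : set T2 -> \bar R := fun A => m (f @^-1` A).

Section pf.
Context d d' (T1 : measurableType d) (T2 : measurableType d') (R : realType).
Variables (m : {measure set T1 -> \bar R}) (f : T1 -> T2) (mf : measurable_fun setT f).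
Local Open Scope ereal_scope.
Let pf0 : pf m mf set0 = 0.
Proof. by rewrite /pf preimage_set0 measure0. Qed.
Let pf_ge0 A : 0 <= pf m mf A.
Proof. exact: measure_ge0. Qed.
Let pf_sa : semi_sigma_additive (pf m mf).
Proof.
move=> F mF tF mUF; rewrite /pf preimage_bigcup.
apply: measure_semi_sigma_additive.
- by move=> n; rewrite -[X in measurable X]setTI; exact: mf.
- apply/trivIsetP => /= i j _ _ ij; rewrite -preimage_setI.
  by move/trivIsetP : tF => /(_ _ _ _ _ ij) ->//; rewrite preimage_set0.
- by rewrite -preimage_bigcup -[X in measurable X]setTI; exact: mf.
Qed.
HB.instance Definition _ := isMeasure.Build _ _ _ (pf m mf) pf0 pf_ge0 pf_sa.
End pf.

Section pfP.
Context d d' (T1 : measurableType d) (T2 : measurableType d') (R : realType).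
Variables (m : probability T1 R) (f : T1 -> T2) (mf : measurable_fun setT f).
Let pf_setT : pf m mf setT = 1%E.
Proof. rewrite /pf preimage_setT; exact: probability_setT. Qed.
HB.instance Definition _ := Measure_isProbability.Build _ _ _ (pf m mf) pf_setT.
End pfP.

Lemma bigcap_cons {I : eqType} {U : Type} (F : I -> set U) a J :
  \bigcap_(j in [set j | j \in a :: J]) F j =
  F a `&` \bigcap_(j in [set j | j \in J]) F j.
Proof.
apply/seteqP; split => t.
- move=> H; split; first by apply: H; rewrite /= inE eqxx.
  by move=> j /= jJ; apply: H; rewrite /= inE jJ orbT.
- by move=> [Fa H] j /=; rewrite inE => /orP[/eqP->//|/H].
Qed.

Lemma bigcap_nil {I : eqType} {U : Type} (F : I -> set U) :
  \bigcap_(j in [set j | j \in [::]]) F j = setT.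
Proof. by apply/seteqP; split=> // t _ j; rewrite /= in_nil. Qed.

Lemma bigcap_seq_measurable d {I : eqType} {U : measurableType d} (F : I -> set U) (J : seq I) :
  (forall j, j \in J -> measurable (F j)) ->
  measurable (\bigcap_(j in [set j | j \in J]) F j).
Proof.
elim: J => [|a J IH] H; first by rewrite bigcap_nil.
rewrite bigcap_cons; apply: measurableI; first by apply: H; rewrite inE eqxx.
by apply: IH => j jJ; apply: H; rewrite inE jJ orbT.
Qed.

Section indep.
Context (R : realType) (d1 d2 : measure_display) (Omega : measurableType d1)
  (P : probability Omega R) (T : measurableType d2) (Q : probability T R)
  (N : nat -> nat) (X : nat * nat -> T -> Omega)
  (hXm : forall s l, measurable_fun setT (X (s, l)))
  (hXP : forall s l, (l < N s)%N -> forall A, measurable A ->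
           Q (X (s, l) @^-1` A) = P A).
Let D := [set sl : nat * nat | (sl.2 < N sl.1)%N].
Hypothesis hXind : forall (J : seq (nat * nat)) (A : nat * nat -> set Omega),
    uniq J -> (forall j, j \in J -> D j) ->
    (forall j, j \in J -> measurable (A j)) ->
    Q (\bigcap_(j in [set j | j \in J]) (X j @^-1` A j)) =
    (\big[*%E/1%E]_(j <- J) Q (X j @^-1` A j))%E.

Lemma hXm' j : measurable_fun setT (X j).
Proof. by case: j. Qed.

Definition PiS (S : set (nat * nat)) : set (set T) :=
  [set E | exists J (A : nat * nat -> set Omega),
    [/\ uniq J, (forall j, j \in J -> S j), (forall j, j \in J -> measurable (A j)) &
        E = \bigcap_(j in [set j | j \in J]) (X j @^-1` A j)]].

Lemma PiS_setI S : setI_closed (PiS S).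
Proof.
move=> _ _ [J1 [A1 [u1 S1 m1 ->]]] [J2 [A2 [u2 S2 m2 ->]]].
exists (undup (J1 ++ J2)), (fun j => (if j \in J1 then A1 j else setT) `&`
                                    (if j \in J2 then A2 j else setT)).
split.
- exact: undup_uniq.
- by move=> j; rewrite mem_undup mem_cat => /orP[/S1|/S2].
- move=> j _; apply: measurableI.
  + by case: ifP => // jJ; apply: m1; rewrite jJ.
  + by case: ifP => // jJ; apply: m2; rewrite jJ.
apply/seteqP; split => t.
- move=> [H1 H2] j /=; rewrite mem_undup mem_cat => _; split.
  + by case: ifP => // jJ; exact: H1.
  + by case: ifP => // jJ; exact: H2.
- move=> H; split => j jJ.
  + by have := H j; rewrite /= mem_undup mem_cat jJ /= => /(_ isT) -[].
  + by have := H j; rewrite /= mem_undup mem_cat jJ orbT /= => /(_ isT) -[].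
Qed.

Lemma PiS_meas S : PiS S `<=` measurable.
Proof.
move=> _ [J [A [u SJ mA ->]]]; apply: bigcap_seq_measurable => j jJ.
by rewrite -[X in measurable X]setTI; apply: hXm' => //; exact: mA.
Qed.

Lemma PiS_T S : PiS S setT.
Proof. by exists [::], (fun _ => setT); split => //; rewrite bigcap_nil. Qed.

Lemma PiS_indep S i B : S `<=` D -> D i -> ~ S i -> measurable B ->
  forall E, PiS S E -> Q (E `&` X i @^-1` B) = (Q E * P B)%E.
Proof.
move=> SD Di nSi mB _ [J [A [u SJ mA ->]]].
pose A' j := if j == i then B else A j.
have iJ : i \notin J by apply/negP => /SJ.
have := hXind (J := i :: J) (A := A') _ _ _.
rewrite /= iJ u => /(_ isT).
have HD : forall j, j \in i :: J -> D j.
  by move=> j; rewrite inE => /orP[/eqP->//|/SJ/SD].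
move=> /(_ HD).
have HM : forall j, j \in i :: J -> measurable (A' j).
  move=> j jJ; rewrite /A'; case: eqP => [_|ji] //; move: jJ.
  by rewrite inE => /orP[/eqP ji'|/mA//].
move=> /(_ HM).
rewrite bigcap_cons big_cons /A' eqxx.
have eqJ : forall j, j \in J -> (if j == i then B else A j) = A j.
  by move=> j jJ; case: eqP => // ji; move: iJ; rewrite -ji jJ.
have -> : \bigcap_(j in [set j | j \in J]) X j @^-1` (if j == i then B else A j) =
          \bigcap_(j in [set j | j \in J]) X j @^-1` A j.
  by apply: eq_bigcapr => j /= jJ; rewrite eqJ.
rewrite (eq_big_seq (fun j => Q (X j @^-1` A j))); last first.
  by move=> j jJ; rewrite eqJ.
rewrite -hXind // => [|j /SJ /SD //].
move=> H; rewrite setIC H.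
have -> : Q (X i @^-1` B) = P B by case: i Di {HD HM iJ nSi A' eqJ H} => a b Di; apply: hXP.
by rewrite muleC.
Qed.

Lemma sPiS_indep S i B : S `<=` D -> D i -> ~ S i -> measurable B ->
  forall E, <<s PiS S >> E -> Q (E `&` X i @^-1` B) = (Q E * P B)%E.
Proof.
move=> SD Di nSi mB E HE.
have mXB : measurable (X i @^-1` B) by rewrite -[X in measurable X]setTI; apply: hXm'.
have pB0 : 0 <= fine (P B) by apply: fine_ge0; exact: measure_ge0.
have fP : P B = (fine (P B))%:E by rewrite fineK // fin_num_measure.
have := @g_sigma_algebra_measure_unique _ _ _ (PiS S) (@PiS_meas S) (fun=> setT)
  (fun=> PiS_T S) _ (mrestr Q mXB) (mscale (NngNum pB0) Q) (@PiS_setI S) _ _ E HE.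
move=> H.
- rewrite -[LHS]/(mrestr Q mXB E) H.
  by rewrite -[LHS]/((NngNum pB0)%:num%:E * Q E)%E /= muleC -fP.
- by rewrite bigcup_const.
- move=> A HA; rewrite -[LHS]/(Q (A `&` X i @^-1` B)) (PiS_indep SD Di nSi mB HA).
  by rewrite -[RHS]/((NngNum pB0)%:num%:E * Q A)%E /= muleC -fP.
- move=> _; rewrite -[X in (X < _)%E]/(Q (setT `&` X i @^-1` B)) setTI.
  by rewrite (le_lt_trans (probability_le1 _ _)) ?ltey.
Qed.

Lemma sPiS_sub S : <<s PiS S >> `<=` @measurable _ T.
Proof. apply: smallest_sub; [exact: sigma_algebra_measurable | exact: PiS_meas]. Qed.

Lemma core S i (SD : S `<=` D) (Di : D i) (nSi : ~ S i) d3 (E : measurableType d3)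
  (Z : T -> E) (hZ : forall B, measurable B -> <<s PiS S >> (Z @^-1` B))
  (H : set (E * Omega)) (mH : measurable H) (K : set T) (hK : <<s PiS S >> K)
  (c : R) (c0 : 0 <= c) (hc : forall t, K t -> (P [set w | H (Z t, w)] <= c%:E)%E) :
  (Q (K `&` [set t | H (Z t, X i t)]) <= c%:E * Q K)%E.
Proof.
pose Tg := g_sigma_algebraType (PiS S).
have idm : @measurable_fun _ _ T Tg setT id.
  by move=> _ A mA; rewrite setTI; apply: sPiS_sub; exact: mA.
have Zm : @measurable_fun _ _ Tg E setT Z.
  by move=> _ B mB; rewrite setTI; exact: hZ.
have fm : @measurable_fun _ _ T (Tg * Omega)%type setT (fun t => (id t, X i t)).
  exact: measurable_fun_pair idm (hXm' i).
pose Qg := pf Q idm.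
pose mu := pf Q fm.
have prodE := @product_measure_unique _ _ Tg Omega R Qg P mu.
have muE : forall A B, measurable A -> measurable B -> mu (A `*` B) = (Qg A * P B)%E.
  move=> A B mA mB.
  rewrite -[LHS]/(Q (A `&` X i @^-1` B)).
  exact: (sPiS_indep SD Di nSi mB mA).
pose H' : set (Tg * Omega) := [set p | K p.1 /\ H (Z p.1, p.2)].
have mH' : measurable H'.
  have -> : H' = (K `*` setT) `&` ((fun p : Tg * Omega => (Z p.1, p.2)) @^-1` H).
    by apply/seteqP; split => [[t w] /= [Kt Ht]| [t w] /= [[Kt _] Ht]].
  apply: measurableI; first exact: measurableX.
  rewrite -[X in measurable X]setTI.
  exact: (measurable_fun_pair (measurableT_comp Zm measurable_fst) measurable_snd).
have <- : (Qg \x P)%E H' = Q (K `&` [set t | H (Z t, X i t)]).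
  by rewrite (prodE muE H' mH').
rewrite /product_measure1.
have -> : (c%:E * Q K = \int[Qg]_t (c%:E * (\1_K t)%:E))%E.
  rewrite ge0_integralZl_EFin //.
  - by rewrite integral_indic // setIT.
  - by apply/measurable_EFinP; exact: measurable_indic.
apply: (@ge0_le_integral _ Tg R Qg setT measurableT).
- by move=> t _; exact: measure_ge0.
- exact: measurable_fun_xsection.
- apply: measurable_funeM; apply/measurable_EFinP; exact: measurable_indic.
move=> t _ /=; have [Kt|nKt] := pselect (K t).
- rewrite indicE mem_set // mule1.
  have -> : xsection H' t = [set w | H (Z t, w)].
    apply/seteqP; split => w; rewrite /xsection /= inE /H' /=; [by case|by split].
  exact: hc.
- have -> : xsection H' t = set0.
    by apply/seteqP; split => w //; rewrite /xsection /= inE /H' /= => -[].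
  by rewrite measure0 mule_ge0 // lee_fin.
Qed.
End indep.
Lemma pow_bound (R : realType) (eps delta k : R) (N : nat) : 0 < eps < 1 -> 0 < delta ->
  0 < k -> ln (k / delta) / eps <= N%:R -> (1 - eps) ^+ N <= delta / k.
Proof.
move=> /andP[e0 e1] d0 k0 hN.
apply: (@le_trans _ _ (expR (- eps) ^+ N)).
  apply: lerXn2r.
  - by rewrite nnegrE subr_ge0 ltW.
  - by rewrite nnegrE expR_ge0.
  - exact: expR_ge1Dx.
rewrite -expRM_natr.
have kd : 0 < k / delta by apply: divr_gt0.
have -> : delta / k = expR (- ln (k / delta)).
  by rewrite expRN lnK ?posrE // invf_div.
rewrite ler_expR mulNr lerN2 -ler_pdivrMl //.
by rewrite mulrC.
Qed.
Lemma foo (R : realType) (eps x : R) : (eps%:E <= 1 - x%:E)%E = (x%:E <= (1-eps)%:E)%E.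
Proof. rewrite -EFinB !lee_fin. apply/idP/idP => H; lra. Qed.
Lemma foo2 (R : realType) (eps x : R) : (eps%:E <= 1 - x%:E)%E <-> (x%:E <= (1-eps)%:E)%E.
Proof. by rewrite foo. Qed.

Unset Implicit Arguments. Set Strict Implicit. Set Printing Implicit Defensive.

Theorem mainTheorem4 (R : realType) (n : nat) (d1 d2 : measure_display)
  (Omega : measurableType d1) (P : probability Omega R)
  (Ycal : set 'rV[R]_n) (G : 'rV[R]_n -> set Omega)
  (hGy : forall y, Ycal y -> measurable (G y))
  (hG : measurable [set z : (Rn R n * Omega)%type | G z.1 z.2])
  (eps delta : R) (heps : 0 < eps < 1) (hdelta : 0 < delta < 1)
  (kappa : nat -> R) (hkappa : forall s, 0 < kappa s)
  (hsum : (\sum_(0 <= s <oo) ((kappa s)^-1)%:E <= 1)%E)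
  (N : nat -> nat) (hN : forall s, ln (kappa s / delta) / eps <= (N s)%:R)
  (T : measurableType d2) (Q : probability T R)
  (X : nat * nat -> T -> Omega)
  (hXm : forall s l, measurable_fun setT (X (s, l)))
  (hXP : forall s l, (l < N s)%N -> forall A, measurable A ->
           Q (X (s, l) @^-1` A) = P A)
  (hXind : mutually_independent Q [set sl | (sl.2 < N sl.1)%N] X)
  (y : nat -> T -> Rn R n) (hyY : forall s t, Ycal (y s t))
  (hy : forall s (B : set (Rn R n)), measurable B ->
          <<s past_gen N X s >> (y s @^-1` B))
  (cont : nat -> T -> bool)
  (hcont : forall s, <<s past_gen N X s.+1 >> (cont s @^-1` [set true])) :
  (Q [set t | exists s,
        [/\ (forall r, (r < s)%N ->
               cont r t /\ ~ (forall l, (l < N r)%N -> G (y r t) (X (r, l) t))),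
            (forall l, (l < N s)%N -> G (y s t) (X (s, l) t)) &
            (eps%:E <= 1 - P (G (y s t)))%E]] <= delta%:E)%E.
Proof.
have hXind' := hXind.
pose HG := [set z : (Rn R n * Omega)%type | G z.1 z.2].
have mPG : measurable_fun (@setT (Rn R n)) (fun z => P (G z)).
  have := measurable_fun_xsection P hG.
  have -> : (P \o xsection HG) = (fun z => P (G z)) => //.
  apply/funext => z /=; congr (P _).
  by apply/seteqP; split => w; rewrite /xsection /= inE.
have key : forall x : \bar R, x \is a fin_num ->
    (eps%:E <= 1 - x)%E <-> (x <= (1 - eps)%:E)%E.
  move=> [r| |] // _; rewrite -EFinB !lee_fin; split => ?; lra.
have xsG : forall z, xsection HG z = G z.
  by move=> z; apply/seteqP; split => w; rewrite /xsection /= inE.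
have mGz : forall z, measurable (G z).
  by move=> z; rewrite -xsG; apply: measurable_xsection.
have fin_numP : forall z, P (G z) \is a fin_num.
  by move=> z; apply: fin_num_measure.
pose Bad := [set z : Rn R n | (eps%:E <= 1 - P (G z))%E].
have mBad : measurable Bad.
  have -> : Bad = (fun z => P (G z)) @^-1` [set` `]-oo, ((1 - eps)%:E)]].
    apply/seteqP; split => z; rewrite /Bad /= in_itv /= (key _ (fin_numP z)) //.
  rewrite -[X in measurable X]setTI; apply: mPG => //; exact: emeasurable_itv.
have singleS : forall (S : set (nat * nat)) j A, S j -> measurable A ->
    PiS X S (X j @^-1` A).
  move=> S j A Sj mA; exists [:: j], (fun=> A); split => //.
  - by move=> k; rewrite inE => /eqP ->.
  - by rewrite bigcap_cons bigcap_nil setIT.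
have pastS : forall s (S : set (nat * nat)),
    (forall r l, (r < s)%N -> (l < N r)%N -> S (r, l)) ->
    <<s past_gen N X s >> `<=` <<s PiS X S >>.
  move=> s S hS; apply: sub_smallest2r; first exact: smallest_sigma_algebra.
  by move=> _ [r [l [A [rs lN mA ->]]]]; apply: singleS => //; exact: hS.
have ymeas : forall r (S : set (nat * nat)),
    (forall r' l, (r' < r)%N -> (l < N r')%N -> S (r', l)) ->
    @measurable_fun _ _ (g_sigma_algebraType (PiS X S)) (Rn R n) setT (y r).
  by move=> r S hS _ B mB; rewrite setTI; exact: (pastS r S hS _ (hy r B mB)).
have Xmeas : forall (S : set (nat * nat)) j, S j ->
    @measurable_fun _ _ (g_sigma_algebraType (PiS X S)) Omega setT (X j).
  by move=> S j Sj _ B mB; rewrite setTI; apply: sub_gen_smallest; exact: singleS.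
pose Tt r k := [set t : T | forall l, (l < k)%N -> G (y r t) (X (r, l) t)].
have mTt : forall r k (S : set (nat * nat)),
    (forall r' l, (r' < r)%N -> (l < N r')%N -> S (r', l)) ->
    (forall l, (l < k)%N -> S (r, l)) ->
    @measurable _ (g_sigma_algebraType (PiS X S)) (Tt r k).
  move=> r k S hS; elim: k => [|k IH] hk.
  - have -> : Tt r 0 = setT by apply/seteqP; split => // t _ l.
    exact: measurableT.
  - have -> : Tt r k.+1 = Tt r k `&` ((fun t => (y r t, X (r, k) t)) @^-1` HG).
      apply/seteqP; split => t /=.
      + move=> H; split; first by move=> l lk; apply: H; exact: leqW.
        by apply: H; exact: ltnSn.
      + by move=> [H1 H2] l; rewrite ltnS leq_eqVlt => /orP[/eqP->//|/H1].
    apply: measurableI; first by apply: IH => l lk; apply: hk; exact: leqW.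
    rewrite -[X in measurable X]setTI.
    by apply: (measurable_fun_pair (ymeas r S hS) (Xmeas S (r, k) (hk k (ltnSn k)))).
have mA : forall s k (S : set (nat * nat)),
    (forall r' l, (r' < s)%N -> (l < N r')%N -> S (r', l)) ->
    (forall l, (l < k)%N -> S (s, l)) ->
    @measurable _ (g_sigma_algebraType (PiS X S)) (y s @^-1` Bad `&` Tt s k).
  move=> s k S hS hk; apply: measurableI; last exact: mTt.
  by rewrite -[X in measurable X]setTI; apply: (ymeas s S hS).
have bound : forall s k, (k <= N s)%N ->
    (Q (y s @^-1` Bad `&` Tt s k) <= ((1 - eps) ^+ k)%:E)%E.
  move=> s; elim => [|k IH] hk.
  - rewrite expr0; apply: probability_le1.
    by apply: (@sPiS_sub _ _ _ _ X hXm setT); apply: mA.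
  pose S := [set rl : nat * nat | ((rl.1 < s)%N /\ (rl.2 < N rl.1)%N) \/
                                   (rl.1 = s /\ (rl.2 < k)%N)].
  have -> : y s @^-1` Bad `&` Tt s k.+1 =
            (y s @^-1` Bad `&` Tt s k) `&` [set t | HG (y s t, X (s, k) t)].
    apply/seteqP; split => t /=.
    + move=> [Bt H]; split; first split => //.
        by move=> l lk; apply: H; exact: leqW.
      by apply: H; exact: ltnSn.
    + by move=> [[Bt H1] H2]; split => // l; rewrite ltnS leq_eqVlt => /orP[/eqP->//|/H1].
  have SD : S `<=` [set sl | (sl.2 < N sl.1)%N].
    move=> [r l] /= [[_ lN]|[rs lk]] //; move: rs lk => /= -> lk; exact: ltn_trans lk hk.
  have Di : [set sl | (sl.2 < N sl.1)%N] (s, k) by [].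
  have nSi : ~ S (s, k) by move=> /= [[]|[]]; rewrite ltnn.
  have hS : forall r' l, (r' < s)%N -> (l < N r')%N -> S (r', l) by move=> r' l ? ?; left.
  have hZ : forall B, measurable B -> <<s PiS X S >> (y s @^-1` B).
    by move=> B mB; exact: (pastS s S hS _ (hy s B mB)).
  have hK : <<s PiS X S >> (y s @^-1` Bad `&` Tt s k).
    by apply: mA => // l lk; right.
  have c0 : 0 <= 1 - eps by lra.
  have hc : forall t, (y s @^-1` Bad `&` Tt s k) t ->
      (P [set w | HG (y s t, w)] <= (1 - eps)%:E)%E.
    by move=> t [Bt _]; exact/(key _ (fin_numP _)).
  apply: le_trans (core hXm hXP hXind SD Di nSi hZ hG hK c0 hc) _.
  rewrite exprS EFinM; apply: lee_wpmul2l; first by rewrite lee_fin.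
  by apply: IH; exact: ltnW.
pose A s := y s @^-1` Bad `&` Tt s (N s).
have hTs : forall r' l, (r' < 0)%N -> (l < N r')%N -> (@setT (nat * nat)) (r', l) by [].
have mAT : forall s, measurable (A s).
  by move=> s; apply: (@sPiS_sub _ _ _ _ X hXm setT); apply: mA.
have mTtT : forall r, measurable (Tt r (N r)).
  by move=> r; apply: (@sPiS_sub _ _ _ _ X hXm setT); apply: mTt.
have mcont : forall r, measurable (cont r @^-1` [set true]).
  move=> r; apply: (@sPiS_sub _ _ _ _ X hXm setT).
  by apply: (pastS r.+1 setT) => //; exact: hcont.
pose Cr s r := [set t | (r < s)%N -> cont r t /\ ~ Tt r (N r) t].
have mCr : forall s r, measurable (Cr s r).
  move=> s r; have [rs|rs] := ltnP r s.
  - have -> : Cr s r = (cont r @^-1` [set true]) `&` ~` Tt r (N r).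
      by apply/seteqP; split => t /=; [move=> /(_ rs)|move=> ? _].
    by apply: measurableI => //; exact: measurableC.
  - have -> : Cr s r = setT.
      apply/seteqP; split => // t _ /=; move=> rs'.
      by move: (leq_trans rs' rs); rewrite ltnn.
    exact: measurableT.
pose Ev := \bigcup_s ((\bigcap_r Cr s r) `&` A s).
have -> : [set t | exists s,
        [/\ (forall r, (r < s)%N ->
               cont r t /\ ~ (forall l, (l < N r)%N -> G (y r t) (X (r, l) t))),
            (forall l, (l < N s)%N -> G (y s t) (X (s, l) t)) &
            (eps%:E <= 1 - P (G (y s t)))%E]] = Ev.
  apply/seteqP; split => t /=.
  - move=> [s [H1 H2 H3]]; exists s => //; split; last by split.
    by move=> r _ rs; exact: H1.
  - move=> [s _ [H1 [H3 H2]]]; exists s; split => //.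
    by move=> r rs; exact: H1.
have mEv : measurable Ev.
  apply: bigcupT_measurable => s; apply: measurableI => //.
  exact: bigcapT_measurable.
apply: le_trans (measure_sigma_subadditive Q (F := A) mAT mEv _) _.
  by move=> t [s _ [_ At]]; exists s.
apply: (@le_trans _ _ (\sum_(0 <= s <oo) (delta%:E * ((kappa s)^-1)%:E))%E).
  apply: lee_nneseries => s _; first by move=> _; exact: measure_ge0.
  apply: le_trans (bound s (N s) (leqnn _)) _.
  rewrite -EFinM lee_fin.
  by apply: (pow_bound heps _ (hkappa s) (hN s)); case/andP: hdelta.
rewrite nneseriesZl; last by move=> s _; rewrite lee_fin invr_ge0 ltW.
rewrite -[X in (_ <= X)%E]mule1; apply: lee_wpmul2l => //.
by rewrite lee_fin; case/andP: hdelta => /ltW.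
Qed.
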